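(* Let $G$ be a connected saturated graph with $|E(G)| \leq |V(G)|$ and $2 \leq mp(G) \leq 3$. Then: (1) if $mp(G)=2$, then $G = K_{1,\Delta}$ for some $\Delta\ge 1$, and if $\Delta \geq 2$ then $mp(G+e)=3$ for every pair $e$ of non-adjacent vertices of $G$; (2) if $mp(G)=3$, then $G = K_3$.
   Context: All graphs are finite and simple. A degree monotone path in a graph $G$ is a path $v_1v_2\ldots v_m$ such that $\deg(v_1)\le \cdots\le \deg(v_m)$ or $\deg(v_1)\ge \cdots\ge \deg(v_m)$; its length is its number of vertices. $mp(G)$ denotes the maximum length of a degree monotone path in $G$. A graph $G$ is saturated if $mp(G+e)>mp(G)$ for every pair $e$ of non-adjacent vertices of $G$, where $G+e$ is $G$ with the edge $e$ added (complete graphs are saturated vacuously). *)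

(* Defs.v *)
From mathcomp Require Import all_boot.
Set Implicit Arguments. Unset Strict Implicit. Unset Printing Implicit Defensive.

Definition simple_graph (T : finType) (e : rel T) : Prop :=
  symmetric e /\ irreflexive e.

Definition deg (T : finType) (e : rel T) (x : T) : nat := #|[set y | e x y]|.

Definition nedges (T : finType) (e : rel T) : nat :=
  #|[set E : {set T} | [exists x, exists y, e x y && (E == [set x; y])]]|.

Definition connected (T : finType) (e : rel T) : Prop :=
  forall x y : T, connect e x y.

Definition dm_path (T : finType) (e : rel T) (s : seq T) : bool :=
  [&& uniq s, sorted e s &
      sorted leq (map (deg e) s) || sorted geq (map (deg e) s)].

(* mp(G): maximum number of vertices of a degree monotone path
   (a path has at most #|T| vertices, so the max over 0..#|T| is exact) *)
Definition mp (T : finType) (e : rel T) : nat :=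
  \max_(i < #|T|.+1 | [exists p : i.-tuple T, dm_path e p]) i.

Definition add_edge (T : finType) (e : rel T) (u v : T) : rel T :=
  fun x y => [|| e x y, (x == u) && (y == v) | (x == v) && (y == u)].

Definition saturated (T : finType) (e : rel T) : Prop :=
  forall u v : T, u != v -> ~~ e u v -> mp e < mp (add_edge e u v).

Definition is_star (T : finType) (e : rel T) (c : T) : Prop :=
  forall x y : T, e x y = ((x == c) && (y != c)) || ((y == c) && (x != c)).

Definition is_K3 (T : finType) (e : rel T) : Prop :=
  #|T| = 3 /\ forall x y : T, e x y = (x != y).

(* Main.v *)
Require Import Defs.
From mathcomp Require Import all_boot.
From mathcomp Require Import zify.
Set Implicit Arguments. Unset Strict Implicit. Unset Printing Implicit Defensive.

Definition mono3 (x y z : nat) : Prop := (x <= y /\ y <= z) \/ (z <= y /\ y <= x).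
Definition mono4 (x y z w : nat) : Prop :=
  (x <= y /\ y <= z /\ z <= w) \/ (w <= z /\ z <= y /\ y <= x).

Definition D3 (T : finType) (e : rel T) (a b c : T) : Prop :=
  [/\ [/\ a != b, a != c & b != c], e a b, e b c &
      mono3 (deg e a) (deg e b) (deg e c)].
Definition D4 (T : finType) (e : rel T) (a b c d : T) : Prop :=
  [/\ [/\ a != b, a != c & a != d], [/\ b != c, b != d & c != d], [/\ e a b, e b c & e c d] &
      mono4 (deg e a) (deg e b) (deg e c) (deg e d)].

Lemma dm3P (T : finType) (e : rel T) a b c : dm_path e [:: a; b; c] <-> D3 e a b c.
Proof.
rewrite /dm_path /D3 /mono3 /= !inE !andbT.
split.
- case/and3P => /andP [/norP [H1 H2] H3] /andP [E1 E2] M; split => //.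
  case/orP: M => /andP [? ?]; lia.
- case => [[H1 H2 H3] E1 E2 M]; apply/and3P; split.
  + by rewrite H3 (negbTE H1) (negbTE H2).
  + by rewrite E1 E2.
  + case: M => [[? ?]|[? ?]]; apply/orP; [left|right]; apply/andP; split => //.
Qed.

Lemma dm4P (T : finType) (e : rel T) a b c d : dm_path e [:: a; b; c; d] <-> D4 e a b c d.
Proof.
rewrite /dm_path /D4 /mono4 /= !inE !andbT.
split.
- case/and3P => /and3P [/norP [H1 /norP [H2 H3]] /norP [H4 H5] H6] /and3P [E1 E2 E3] M;
  split => //.
  case/orP: M => /and3P [? ? ?]; lia.
- case => [[H1 H2 H3] [H4 H5 H6] [E1 E2 E3] M]; apply/and3P; split.
  + by rewrite H6 (negbTE H1) (negbTE H2) (negbTE H3) (negbTE H4) (negbTE H5).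
  + by rewrite E1 E2 E3.
  + case: M => [[? [? ?]]|[? [? ?]]]; apply/orP; [left|right]; apply/and3P; split => //.
Qed.

Lemma mp_ub (T : finType) (e : rel T) s : dm_path e s -> size s <= mp e.
Proof.
move=> Hs.
have Hu : uniq s by case/and3P: Hs.
have Hsz : size s < #|T|.+1.
  by rewrite ltnS -(card_uniqP Hu) max_card.
rewrite /mp.
have := @leq_bigmax_cond _ (fun i : 'I_#|T|.+1 => [exists p : i.-tuple T, dm_path e p])
  (fun i => nat_of_ord i) (Ordinal Hsz).
apply => /=.
by apply/existsP; exists (in_tuple s).
Qed.

Lemma mp_wit (T : finType) (e : rel T) : exists s, dm_path e s /\ size s = mp e.
Proof.
rewrite /mp.
set P := (fun i : 'I_#|T|.+1 => [exists p : i.-tuple T, dm_path e p]).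
have HP : 0 < #|P|.
  apply/card_gt0P; exists ord0; rewrite /P /in_mem /=; apply/existsP; exists [tuple].
  by rewrite /dm_path.
have [i0 Hi0 ->] := @eq_bigmax_cond _ P (fun i => nat_of_ord i) HP.
case/existsP: Hi0 => p Hp; exists p; split => //; exact: size_tuple.
Qed.

Lemma mp_le_card (T : finType) (e : rel T) : mp e <= #|T|.
Proof.
have [s [Hs <-]] := mp_wit e.
have Hu : uniq s by case/and3P: Hs.
by rewrite -(card_uniqP Hu) max_card.
Qed.

Lemma dm_prefix (T : finType) (e : rel T) s1 s2 : dm_path e (s1 ++ s2) -> dm_path e s1.
Proof.
case/and3P => Hu Hs Hm; apply/and3P; split.
- by move: Hu; rewrite cat_uniq => /andP [].
- by case: (cat_sorted2 Hs).
- rewrite map_cat in Hm; case/orP: Hm => Hm; apply/orP; [left|right];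
  by case: (cat_sorted2 Hm).
Qed.

Lemma mp4 (T : finType) (e : rel T) : 4 <= mp e -> exists a b c d, D4 e a b c d.
Proof.
have [s [Hs Hsz]] := mp_wit e.
rewrite -Hsz; case: s Hs {Hsz} => [|a [|b [|c [|d r]]]] // Hs _.
exists a, b, c, d; apply/dm4P.
by apply: (@dm_prefix _ _ _ r).
Qed.

Lemma mp3 (T : finType) (e : rel T) : 3 <= mp e -> exists a b c, D3 e a b c.
Proof.
have [s [Hs Hsz]] := mp_wit e.
rewrite -Hsz; case: s Hs {Hsz} => [|a [|b [|c r]]] // Hs _.
exists a, b, c; apply/dm3P.
by apply: (@dm_prefix _ _ _ r).
Qed.

Lemma D4_mp (T : finType) (e : rel T) a b c d : D4 e a b c d -> 4 <= mp e.
Proof. by move/dm4P/mp_ub. Qed.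

Lemma D3_mp (T : finType) (e : rel T) a b c : D3 e a b c -> 3 <= mp e.
Proof. by move/dm3P/mp_ub. Qed.

Lemma nbr1 (T : finType) (e : rel T) v p z : deg e v = 1 -> e v p -> e v z -> z = p.
Proof.
rewrite /deg => /eqP /cards1P [x Hx] Hp Hz.
have : p \in [set y | e v y] by rewrite inE.
have : z \in [set y | e v y] by rewrite inE.
by rewrite Hx !inE => /eqP -> /eqP ->.
Qed.

Lemma nbr2 (T : finType) (e : rel T) v p q z : deg e v = 2 -> e v p -> e v q -> p != q ->
  e v z -> z = p \/ z = q.
Proof.
rewrite /deg => /eqP /cards2P [x [y [Hxy Hx]]] Hp Hq Hpq Hz.
have : p \in [set y | e v y] by rewrite inE.
have : q \in [set y | e v y] by rewrite inE.
have : z \in [set y | e v y] by rewrite inE.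
rewrite Hx !inE => /orP [] /eqP Ez /orP [] /eqP Eq /orP [] /eqP Ep; subst;
  rewrite ?eqxx // in Hpq; by [left | right].
Qed.

Lemma nbr_other (T : finType) (e : rel T) v p : 2 <= deg e v -> exists q, e v q /\ q != p.
Proof.
rewrite /deg (cardsD1 p) => H.
have : 0 < #|[set y | e v y] :\ p| by move: H; case: (p \in _) => /=; lia.
case/card_gt0P => q; rewrite !inE => /andP [Hq1 Hq2]; by exists q.
Qed.

Lemma deg_pos (T : finType) (e : rel T) v p : e v p -> 0 < deg e v.
Proof. by move=> H; apply/card_gt0P; exists p; rewrite inE. Qed.

Lemma deg0 (T : finType) (e : rel T) v p : deg e v = 0 -> ~~ e v p.
Proof. move=> H; apply/negP => /deg_pos; by rewrite H. Qed.

Lemma add_sym (T : finType) (e : rel T) u v : symmetric e -> symmetric (add_edge e u v).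
Proof.
move=> S x y; rewrite /add_edge S; congr (_ || _).
by rewrite orbC; congr (_ || _); rewrite andbC.
Qed.

Lemma add_old (T : finType) (e : rel T) u v x y : add_edge e u v x y -> x != u -> x != v -> e x y.
Proof. by rewrite /add_edge => /or3P [] // /andP [] /eqP -> _; rewrite eqxx. Qed.

Lemma add_old2 (T : finType) (e : rel T) u v x y : add_edge e u v x y -> y != u -> y != v -> e x y.
Proof. by rewrite /add_edge => /or3P [] // /andP [] _ /eqP ->; rewrite eqxx. Qed.

Lemma add_new (T : finType) (e : rel T) u v x y : e x y -> add_edge e u v x y.
Proof. by rewrite /add_edge => ->. Qed.

Lemma add_uv (T : finType) (e : rel T) u v : add_edge e u v u v.
Proof. by rewrite /add_edge !eqxx /= orbT. Qed.

Lemma add_vu (T : finType) (e : rel T) u v : add_edge e u v v u.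
Proof. by rewrite /add_edge !eqxx /= !orbT. Qed.

Lemma deg_add (T : finType) (e : rel T) u v z : symmetric e -> u != v -> ~~ e u v ->
  deg (add_edge e u v) z = deg e z + ((z == u) || (z == v)).
Proof.
move=> S Huv Heuv; rewrite /deg.
case: (eqVneq z u) => [->|Hzu] /=.
  have -> : [set y | add_edge e u v u y] = v |: [set y | e u y].
    apply/setP => y; rewrite !inE /add_edge eqxx (negbTE Huv) /=.
    by rewrite orbF orbC.
  by rewrite cardsU1 inE (negbTE Heuv); lia.
case: (eqVneq z v) => [->|Hzv] /=.
  have -> : [set y | add_edge e u v v y] = u |: [set y | e v y].
    apply/setP => y; rewrite !inE /add_edge eqxx eq_sym (negbTE Huv) /=.
    by rewrite orbC.
  by rewrite cardsU1 inE S (negbTE Heuv); lia.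
rewrite addn0; apply: eq_card => y; rewrite !inE /add_edge (negbTE Hzu) (negbTE Hzv) /=.
by rewrite orbF.
Qed.

Definition smax (T : finType) (e : rel T) z := forall y, e z y -> deg e y < deg e z.
Definition smin (T : finType) (e : rel T) z := forall y, e z y -> deg e z < deg e y.
Definition ext (T : finType) (e : rel T) z := smax e z \/ smin e z.

Lemma interior (T : finType) (e : rel T) p q r : symmetric e -> e p q -> e q r ->
  mono3 (deg e p) (deg e q) (deg e r) -> ext e q -> False.
Proof.
move=> S Hpq Hqr M [H|H].
- have := H _ Hqr; rewrite S in Hpq; have := H _ Hpq; rewrite /mono3 in M; lia.
- have := H _ Hqr; rewrite S in Hpq; have := H _ Hpq; rewrite /mono3 in M; lia.
Qed.

Lemma ext_diff (T : finType) (e : rel T) p q : e p q -> ext e p -> deg e p != deg e q.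
Proof. move=> H [K|K]; have := K _ H; lia. Qed.

Lemma T4 (T : finType) (e : rel T) u v p0 p1 p2 p3 : symmetric e -> u != v -> ~~ e u v ->
  D4 (add_edge e u v) p0 p1 p2 p3 ->
  p1 != u -> p1 != v -> p2 != u -> p2 != v ->
  ((p0 == u) || (p0 == v) -> deg (add_edge e u v) p0 != deg (add_edge e u v) p1) ->
  ((p3 == u) || (p3 == v) -> deg (add_edge e u v) p3 != deg (add_edge e u v) p2) ->
  D4 e p0 p1 p2 p3.
Proof.
move=> S Huv He [D1 D2 [E1 E2 E3] M] H1u H1v H2u H2v C0 C3; split => //.
- split; [exact: add_old2 E1 _ _ | exact: add_old E2 _ _ | exact: add_old E3 _ _].
move: M C0 C3; rewrite /mono4 !deg_add // (negbTE H1u) (negbTE H1v) (negbTE H2u) (negbTE H2v) /=.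
case: ((p0 == u) || (p0 == v)); case: ((p3 == u) || (p3 == v)) => /= M C0 C3;
  try (have {C0} C0 := C0 isT); try (have {C3} C3 := C3 isT); lia.
Qed.

Lemma T3 (T : finType) (e : rel T) u v p0 p1 p2 : symmetric e -> u != v -> ~~ e u v ->
  D3 (add_edge e u v) p0 p1 p2 ->
  p1 != u -> p1 != v ->
  ((p0 == u) || (p0 == v) -> deg (add_edge e u v) p0 != deg (add_edge e u v) p1) ->
  ((p2 == u) || (p2 == v) -> deg (add_edge e u v) p2 != deg (add_edge e u v) p1) ->
  D3 e p0 p1 p2.
Proof.
move=> S Huv He [D1 E1 E2 M] H1u H1v C0 C2; split => //.
- exact: add_old2 E1 _ _.
- exact: add_old E2 _ _.
move: M C0 C2; rewrite /mono3 !deg_add // (negbTE H1u) (negbTE H1v) /=.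
case: ((p0 == u) || (p0 == v)); case: ((p2 == u) || (p2 == v)) => /= M C0 C3;
  try (have {C0} C0 := C0 isT); try (have {C3} C3 := C3 isT); lia.
Qed.

Lemma TE4 (T : finType) (e : rel T) u v p0 p1 p2 p3 : symmetric e -> u != v -> ~~ e u v ->
  ext (add_edge e u v) u -> ext (add_edge e u v) v ->
  D4 (add_edge e u v) p0 p1 p2 p3 -> D4 e p0 p1 p2 p3.
Proof.
move=> S Huv He Xu Xv D; have S' := add_sym u v S.
have D' := D; case: D' => [D1 D2 [E1 E2 E3] M].
have M1 : mono3 (deg (add_edge e u v) p0) (deg (add_edge e u v) p1) (deg (add_edge e u v) p2)
  by rewrite /mono3; rewrite /mono4 in M; lia.
have M2 : mono3 (deg (add_edge e u v) p1) (deg (add_edge e u v) p2) (deg (add_edge e u v) p3)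
  by rewrite /mono3; rewrite /mono4 in M; lia.
have N1 : forall z, z = u \/ z = v -> z = p1 -> False.
  move=> z [] -> E; [apply: (interior S' E1 E2 M1); rewrite -E //|
                     apply: (interior S' E1 E2 M1); rewrite -E //].
have N2 : forall z, z = u \/ z = v -> z = p2 -> False.
  move=> z [] -> E; [apply: (interior S' E2 E3 M2); rewrite -E //|
                     apply: (interior S' E2 E3 M2); rewrite -E //].
apply: (T4 S Huv He D).
- by apply/eqP => E; apply: (N1 u) => //; left.
- by apply/eqP => E; apply: (N1 v) => //; right.
- by apply/eqP => E; apply: (N2 u) => //; left.
- by apply/eqP => E; apply: (N2 v) => //; right.
- case/orP => /eqP E; apply: ext_diff => //; rewrite E //.
- rewrite S' in E3; case/orP => /eqP E; apply: ext_diff => //; rewrite E //.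
Qed.

Lemma TE3 (T : finType) (e : rel T) u v p0 p1 p2 : symmetric e -> u != v -> ~~ e u v ->
  ext (add_edge e u v) u -> ext (add_edge e u v) v ->
  D3 (add_edge e u v) p0 p1 p2 -> D3 e p0 p1 p2.
Proof.
move=> S Huv He Xu Xv D; have S' := add_sym u v S.
have D' := D; case: D' => [D1 E1 E2 M].
have N1 : forall z, z = u \/ z = v -> z = p1 -> False.
  move=> z [] -> E; [apply: (interior S' E1 E2 M); rewrite -E //|
                     apply: (interior S' E1 E2 M); rewrite -E //].
apply: (T3 S Huv He D).
- by apply/eqP => E; apply: (N1 u) => //; left.
- by apply/eqP => E; apply: (N1 v) => //; right.
- case/orP => /eqP E; apply: ext_diff => //; rewrite E //.
- rewrite S' in E2; case/orP => /eqP E; apply: ext_diff => //; rewrite E //.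
Qed.

Lemma D4_rev (T : finType) (e : rel T) a b c d : symmetric e -> D4 e a b c d -> D4 e d c b a.
Proof.
move=> S [[H1 H2 H3] [H4 H5 H6] [E1 E2 E3] M]; split.
- by split; rewrite eq_sym.
- by split; rewrite eq_sym.
- by split; rewrite S.
- rewrite /mono4 in M *; lia.
Qed.

Lemma D4_int1 (T : finType) (f : rel T) a b c d : symmetric f -> D4 f a b c d -> ext f b -> False.
Proof.
move=> S [_ _ [E1 E2 E3] M]; apply: (interior S E1 E2); rewrite /mono3; rewrite /mono4 in M; lia.
Qed.

Lemma D4_int2 (T : finType) (f : rel T) a b c d : symmetric f -> D4 f a b c d -> ext f c -> False.
Proof.
move=> S [_ _ [E1 E2 E3] M]; apply: (interior S E2 E3); rewrite /mono3; rewrite /mono4 in M; lia.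
Qed.

Lemma LBkey (T : finType) (f : rel T) x c1 c2 q0 q1 q2 q3 : symmetric f -> ext f x ->
  (forall z, f c1 z -> z = x \/ z = c2) -> (forall z, f c2 z -> z = x \/ z = c1) ->
  D4 f q0 q1 q2 q3 -> q1 != c1.
Proof.
move=> S X N1 N2 D; apply/eqP => E.
have I1 : q1 != x by apply/eqP => E'; apply: (D4_int1 S D); rewrite E'.
have I2 : q2 != x by apply/eqP => E'; apply: (D4_int2 S D); rewrite E'.
case: D => [[H1 H2 H3] [H4 H5 H6] [E1 E2 E3] M].
subst q1.
have [Hq2|Hq2] := N1 _ E2; first by rewrite Hq2 eqxx in I2.
subst q2.
rewrite S in E1.
have [Hq0|Hq0] := N1 _ E1; last by rewrite Hq0 eqxx in H2.
subst q0.
have [Hq3|Hq3] := N2 _ E3; subst q3; [by rewrite eqxx in H3 | by rewrite eqxx in H5].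
Qed.

Lemma LGkey (T : finType) (f : rel T) u w b q0 q1 q2 q3 : symmetric f -> ext f u ->
  (forall z, f b z -> z = w \/ z = u) -> (forall z, f w z -> z = b \/ z = u) ->
  D4 f q0 q1 q2 q3 -> q1 != b.
Proof.
move=> S X N1 N2 D; apply/eqP => E.
have I1 : q1 != u by apply/eqP => E'; apply: (D4_int1 S D); rewrite E'.
have I2 : q2 != u by apply/eqP => E'; apply: (D4_int2 S D); rewrite E'.
case: D => [[H1 H2 H3] [H4 H5 H6] [E1 E2 E3] M].
subst q1.
have [Hq2|Hq2] := N1 _ E2; last by rewrite Hq2 eqxx in I2.
subst q2.
rewrite S in E1.
have [Hq0|Hq0] := N1 _ E1; first by rewrite Hq0 eqxx in H2.
subst q0.
have [Hq3|Hq3] := N2 _ E3; subst q3; [by rewrite eqxx in H5 | by rewrite eqxx in H3].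
Qed.

Lemma LS (T : finType) (f : rel T) x y q0 q1 q2 q3 : symmetric f ->
  (forall z, [\/ z = x, z = y | smin f z]) -> D4 f q0 q1 q2 q3 -> False.
Proof.
move=> S All D.
have A1 : q1 = x \/ q1 = y.
  case: (All q1) => [->|->|H]; [by left|by right|].
  by exfalso; apply: (D4_int1 S D); right.
have A2 : q2 = x \/ q2 = y.
  case: (All q2) => [->|->|H]; [by left|by right|].
  by exfalso; apply: (D4_int2 S D); right.
case: D => [[H1 H2 H3] [H4 H5 H6] [E1 E2 E3] M].
have B0 : smin f q0.
  case: (All q0) => [E|E|//]; subst;
  case: A1 => E'; subst; case: A2 => E''; subst; rewrite ?eqxx // in H1 H2 H4.
have B3 : smin f q3.
  case: (All q3) => [E|E|//]; subst;
  case: A1 => E'; subst; case: A2 => E''; subst; rewrite ?eqxx // in H3 H5 H6 H4.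
have := B0 _ E1; rewrite S in E3; have := B3 _ E3; rewrite /mono4 in M; lia.
Qed.

Lemma add_cases (T : finType) (e : rel T) u v z y : add_edge e u v z y ->
  [\/ e z y, z = u /\ y = v | z = v /\ y = u].
Proof.
rewrite /add_edge => /or3P [H|/andP [/eqP -> /eqP ->]|/andP [/eqP -> /eqP ->]];
  by [apply: Or31 | apply: Or32 | apply: Or33].
Qed.

Lemma LB (T : finType) (e : rel T) x b1 b2 p0 p1 p2 p3 : symmetric e -> irreflexive e ->
  b1 != b2 -> deg e b1 = 1 -> deg e b2 = 1 -> e b1 x -> e b2 x ->
  smax (add_edge e b1 b2) x ->
  D4 (add_edge e b1 b2) p0 p1 p2 p3 -> D4 e p0 p1 p2 p3.
Proof.
move=> S I H12 d1 d2 E1 E2 X D.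
set f := add_edge e b1 b2.
have Sf : symmetric f := add_sym b1 b2 S.
have Ne : ~~ e b1 b2.
  apply/negP => E; have := nbr1 d1 E1 E => Ex; subst b2; by rewrite I in E2.
have N1 : forall z, f b1 z -> z = x \/ z = b2.
  move=> z /add_cases [H|[_ ->]|[H _]]; [left; exact: nbr1 d1 E1 H| by right|].
  by rewrite H eqxx in H12.
have N2 : forall z, f b2 z -> z = x \/ z = b1.
  move=> z /add_cases [H|[H _]|[_ ->]]; [left; exact: nbr1 d2 E2 H| |by right].
  by rewrite H eqxx in H12.
have Xx : ext f x by left.
have K : forall q0 q1 q2 q3, D4 f q0 q1 q2 q3 -> [/\ q1 != b1, q1 != b2, q0 != b1 & q0 != b2].
  move=> q0 q1 q2 q3 Dq.
  have A1 := LBkey Sf Xx N1 N2 Dq.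
  have A2 := LBkey Sf Xx N2 N1 Dq.
  have I1 : q1 != x by apply/eqP => E'; apply: (D4_int1 Sf Dq); rewrite E'.
  case: Dq => [_ _ [F1 _ _] _].
  split => //; apply/eqP => E; subst q0.
  - by case: (N1 _ F1) => E; [rewrite E eqxx in I1 | rewrite E eqxx in A2].
  - by case: (N2 _ F1) => E; [rewrite E eqxx in I1 | rewrite E eqxx in A1].
have [K1 K2 K3 K4] := K _ _ _ _ D.
have [K5 K6 K7 K8] := K _ _ _ _ (D4_rev Sf D).
apply: (T4 S H12 Ne D) => //.
- by rewrite (negbTE K3) (negbTE K4).
- by rewrite (negbTE K7) (negbTE K8).
Qed.

Lemma LG (T : finType) (e : rel T) b w u p0 p1 p2 p3 : symmetric e -> irreflexive e ->
  e b w -> deg e b = 1 -> deg e w = 2 -> e w u -> b != u -> ~~ e b u ->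
  smax (add_edge e b u) u ->
  D4 (add_edge e b u) p0 p1 p2 p3 -> D4 e p0 p1 p2 p3.
Proof.
move=> S I Ebw db dw Ewu Hbu Ne X D.
set f := add_edge e b u.
have Sf : symmetric f := add_sym b u S.
have Hwb : w != b by apply/eqP => E; subst; rewrite I in Ebw.
have Hwu : w != u by apply/eqP => E; subst; rewrite I in Ewu.
have N1 : forall z, f b z -> z = w \/ z = u.
  move=> z /add_cases [H|[_ ->]|[H _]]; [left; exact: nbr1 db Ebw H| by right|].
  by rewrite H eqxx in Hbu.
have N2 : forall z, f w z -> z = b \/ z = u.
  move=> z H; have H' := add_old H Hwb Hwu.
  rewrite S in Ebw; exact: nbr2 dw Ebw Ewu Hbu H'.
have Xu : ext f u by left.
have K : forall q0 q1 q2 q3, D4 f q0 q1 q2 q3 -> [/\ q1 != b, q1 != u, q0 != b &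
    ((q0 == b) || (q0 == u) -> deg f q0 != deg f q1)].
  move=> q0 q1 q2 q3 Dq.
  have A1 := LGkey Sf Xu N1 N2 Dq.
  have I1 : q1 != u by apply/eqP => E'; apply: (D4_int1 Sf Dq); rewrite E'.
  have I2 : q2 != u by apply/eqP => E'; apply: (D4_int2 Sf Dq); rewrite E'.
  case: Dq => [[G1 G2 G3] _ [F1 F2 _] _].
  have A3 : q0 != b.
    apply/eqP => E; subst q0.
    case: (N1 _ F1) => E; last by rewrite E eqxx in I1.
    subst q1; case: (N2 _ F2) => E; subst; by rewrite eqxx in G2 I2.
  split => //.
  rewrite (negbTE A3) /= => /eqP E; subst q0; exact: ext_diff F1 Xu.
have [K1 K2 K3 K4] := K _ _ _ _ D.
have [K5 K6 K7 K8] := K _ _ _ _ (D4_rev Sf D).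
exact: (T4 S Hbu Ne D).
Qed.

Lemma set2_in (T : finType) (a b c : T) : a \in [set b; c] -> a = b \/ a = c.
Proof. by rewrite !inE => /orP [] /eqP ->; [left|right]. Qed.

Lemma handshake (T : finType) (e : rel T) : irreflexive e ->
  \sum_v deg e v <= 2 * nedges e.
Proof.
move=> I.
set D := [set p : T * T | e p.1 p.2].
have HD : \sum_v deg e v = #|D|.
  rewrite -sum1_card.
  transitivity (\sum_(v : T) \sum_(y | e v y) 1).
    by apply: eq_bigr => v _; rewrite /deg -sum1_card; apply: eq_bigl => y; rewrite inE.
  rewrite pair_big_dep /=; apply: eq_bigl => p; by rewrite inE.
rewrite HD.
set Es := [set E : {set T} | [exists x, exists y, e x y && (E == [set x; y])]].
pose f := fun p : T * T => ([set p.1; p.2], (enum_rank p.1 < enum_rank p.2)%N).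
have Hinj : {in D &, injective f}.
  move=> [a b] [c d]; rewrite !inE /= /f => Hab Hcd [] Es1 Er.
  have Hneab : a != b by apply/eqP => E; subst; rewrite I in Hab.
  have Hnecd : c != d by apply/eqP => E; subst; rewrite I in Hcd.
  have Ha : a \in [set c; d] by rewrite -Es1 !inE eqxx.
  have Hb : b \in [set c; d] by rewrite -Es1 !inE eqxx orbT.
  case: (set2_in Ha) => Ea; subst a; case: (set2_in Hb) => Eb; subst b;
    rewrite ?eqxx // in Hneab Hnecd *.
  exfalso.
  have : enum_rank d != enum_rank c.
    by apply/eqP => /enum_rank_inj E; rewrite E eqxx in Hnecd.
  move: Er; case: (enum_rank d) => x Hx; case: (enum_rank c) => y Hy /= Er.
  move/eqP => Nxy. have Nxy' : x <> y by move=> E; apply: Nxy; subst; congr Ordinal; exact: bool_irrelevance.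
  move: Er; case: ltngtP => //; try lia.
rewrite -(card_in_imset Hinj).
have Hsub : f @: D \subset setX Es [set: bool].
  apply/subsetP => q /imsetP [[a b]]; rewrite inE /= => Hab ->; rewrite !inE /= andbT.
  apply/existsP; exists a; apply/existsP; exists b; by rewrite Hab eqxx.
have := subset_leq_card Hsub; rewrite cardsX cardsT card_bool /nedges -/Es; lia.
Qed.

Lemma CI (T : finType) (e : rel T) : irreflexive e -> (forall v, 0 < deg e v) ->
  nedges e <= #|T| -> \sum_v (deg e v - 2) <= #|[set v | deg e v == 1]|.
Proof.
move=> I Hpos Hn.
have H1 := handshake I.
have H2 : \sum_v (deg e v - 2) + \sum_(v : T) 2 = \sum_v deg e v + \sum_v (deg e v == 1 : nat).
  rewrite -!big_split /=; apply: eq_bigr => v _; have := Hpos v.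
  case: (deg e v) => [|[|n]] //= _; lia.
have H3 : \sum_(v : T) 2 = 2 * #|T| by rewrite sum_nat_const mulnC.
have H4 : \sum_v (deg e v == 1 : nat) = #|[set v | deg e v == 1]|.
  rewrite -sum1_card [RHS]big_mkcond /=; apply: eq_bigr => w _; rewrite inE; by case: (_ == _).
lia.
Qed.

Lemma closedT (T : finType) (e : rel T) (P : pred T) x0 : connected e -> P x0 ->
  (forall u v, P u -> e u v -> P v) -> forall y, P y.
Proof.
move=> C H0 Hc y; have /connectP [p Hp ->] := C x0 y.
elim: p x0 H0 Hp => [|z p IH] x /= Hx //.
case/andP => Hxz Hp; apply: IH Hp; exact: Hc Hxz.
Qed.

Lemma nbr_ex (T : finType) (e : rel T) v : 0 < deg e v -> exists y, e v y.
Proof. by case/card_gt0P => y; rewrite inE => H; exists y. Qed.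

Lemma deg_pos_conn (T : finType) (e : rel T) v w : connected e -> v != w -> 0 < deg e v.
Proof.
move=> C Hvw; have /connectP [p Hp Hl] := C v w.
case: p Hp Hl => [|z p] /=; first by move=> _ E; rewrite -E eqxx in Hvw.
by case/andP => H _ _; apply: deg_pos H.
Qed.

Lemma term_le_sum (T : finType) (F : T -> nat) i : F i <= \sum_j F j.
Proof. by rewrite (bigD1 i) //= leq_addr. Qed.

Lemma term2_le_sum (T : finType) (F : T -> nat) i j : i != j -> F i + F j <= \sum_k F k.
Proof.
move=> H; rewrite (bigD1 i) //= (bigD1 j) /=; last by rewrite eq_sym.
by rewrite addnA leq_addr.
Qed.

Lemma smax_add (T : finType) (e : rel T) u v z o : symmetric e -> irreflexive e ->
  u != v -> ~~ e u v -> (z = u /\ o = v) \/ (z = v /\ o = u) ->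
  (forall y, e z y -> deg e y <= deg e z) -> deg e o < deg e z ->
  smax (add_edge e u v) z.
Proof.
move=> S I Huv Ne Hzo W Lt y Hy.
have Nzo : ~~ e z o by case: Hzo => [[-> ->]|[-> ->]] //; rewrite S.
have Hzo' : z != o by case: Hzo => [[-> ->]|[-> ->]] //; rewrite eq_sym.
rewrite !deg_add //.
have -> : (z == u) || (z == v) by case: Hzo => [[-> _]|[-> _]]; rewrite eqxx ?orbT.
case/add_cases: Hy => [H|[E1 E2]|[E1 E2]].
- have Hyo : y != o by apply/eqP => E; subst; rewrite H in Nzo.
  have Hyz : y != z by apply/eqP => E; subst; rewrite I in H.
  have -> : (y == u) || (y == v) = false.
    by case: Hzo => [[E1 E2]|[E1 E2]]; subst; rewrite (negbTE Hyo) (negbTE Hyz).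
  have := W _ H; lia.
- subst; case: Hzo => [[_ <-]|[E _]]; last by rewrite E eqxx in Huv.
  rewrite eqxx orbT; lia.
- subst; case: Hzo => [[E _]|[_ <-]]; first by rewrite E eqxx in Huv.
  rewrite eqxx; lia.
Qed.

Lemma smin_add (T : finType) (e : rel T) u v z o : symmetric e -> irreflexive e ->
  u != v -> ~~ e u v -> (z = u /\ o = v) \/ (z = v /\ o = u) ->
  (forall y, e z y -> deg e z + 2 <= deg e y) -> deg e z < deg e o ->
  smin (add_edge e u v) z.
Proof.
move=> S I Huv Ne Hzo W Lt y Hy.
have Nzo : ~~ e z o by case: Hzo => [[-> ->]|[-> ->]] //; rewrite S.
rewrite !deg_add //.
have -> : (z == u) || (z == v) by case: Hzo => [[-> _]|[-> _]]; rewrite eqxx ?orbT.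
case/add_cases: Hy => [H|[E1 E2]|[E1 E2]].
- have Hyo : y != o by apply/eqP => E; subst; rewrite H in Nzo.
  have Hyz : y != z by apply/eqP => E; subst; rewrite I in H.
  have -> : (y == u) || (y == v) = false.
    by case: Hzo => [[E1 E2]|[E1 E2]]; subst; rewrite (negbTE Hyo) (negbTE Hyz).
  have := W _ H; lia.
- subst; case: Hzo => [[_ <-]|[E _]]; last by rewrite E eqxx in Huv.
  rewrite eqxx orbT; lia.
- subst; case: Hzo => [[E _]|[_ <-]]; first by rewrite E eqxx in Huv.
  rewrite eqxx; lia.
Qed.


Lemma argmax_deg (T : finType) (e : rel T) (p : T) : exists x, forall y, deg e y <= deg e x.
Proof.
exists [arg max_(i > p) deg e i]; case: arg_maxnP => // i _ H y; exact: H.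
Qed.

Lemma star_of (T : finType) (e : rel T) x : symmetric e -> irreflexive e -> connected e ->
  (forall a a', e a a' -> (a == x) || (a' == x)) -> is_star e x.
Proof.
move=> S I C EdgeX.
have All : forall y, (y == x) || e x y.
  apply: (closedT (P := fun y => (y == x) || e x y) (x0 := x)) C _ _; first by rewrite eqxx.
  move=> u v /orP [/eqP ->|Hxu] H; first by rewrite H orbT.
  by have := EdgeX _ _ H; case/orP => [/eqP E|->]; [subst; rewrite I in Hxu|].
move=> u v; apply/idP/idP.
- move=> H; have Huv : u != v by apply/eqP => E; subst; rewrite I in H.
  case/orP: (EdgeX _ _ H) => /eqP E; subst.
  + by rewrite eqxx /= eq_sym Huv.
  + by rewrite eqxx /= Huv orbT.
- case/orP => /andP [/eqP -> Hvx].
  + by have := All v; rewrite (negbTE Hvx).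
  + by have := All u; rewrite (negbTE Hvx) /= S.
Qed.

Lemma part2 (T : finType) (e : rel T) : symmetric e -> irreflexive e -> connected e ->
  saturated e -> nedges e <= #|T| -> mp e = 2 -> exists c, is_star e c.
Proof.
move=> S I C Sat Hn Hmp.
have noD3 : forall a b c, D3 e a b c -> False by move=> a b c /D3_mp; rewrite Hmp.
have [s [Hs Hsz]] := mp_wit e.
rewrite Hmp in Hsz; case: s Hs Hsz => [|p [|q [|? ?]]] //= Hs _.
have Epq : e p q by case/and3P: Hs => _ /andP [].
have Eqp : e q p by rewrite S.
have Hpq : p != q by apply/eqP => E; subst; rewrite I in Epq.
have Hqp : q != p by rewrite eq_sym.
have Hpos : forall v, 0 < deg e v.
  move=> v; case: (eqVneq v p) => [->|H]; [exact: deg_pos Epq| exact: deg_pos_conn C H].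
have [x Hmax] := argmax_deg e p.
case: (leqP (deg e x) 1) => Hx1.
- have dp : deg e p = 1 by move: (Hmax p) (Hpos p) Hx1; clear - e; lia.
  have dq : deg e q = 1 by move: (Hmax q) (Hpos q) Hx1; clear - e; lia.
  have All : forall y, (y == p) || (y == q).
    apply: (closedT (P := fun y => (y == p) || (y == q)) (x0 := p)) C _ _; first by rewrite eqxx.
    move=> u v /orP [] /eqP -> H.
    + by rewrite (nbr1 dp Epq H) eqxx orbT.
    + by rewrite (nbr1 dq Eqp H) eqxx.
  exists p => u v.
  case/orP: (All u) => /eqP ->; case/orP: (All v) => /eqP ->;
    by rewrite ?(negbTE Hpq) ?(negbTE Hqp) ?I ?Epq ?Eqp ?eqxx.
have xs : forall y, e x y -> deg e y < deg e x.
  move=> y Hy; rewrite ltnNge; apply/negP => Hle.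
  have [z [Hz Hzy]] := nbr_other y Hx1.
  apply: (noD3 z x y); split.
  + split.
    * by apply/eqP => E; subst; rewrite I in Hz.
    * done.
    * by apply/eqP => E; subst; rewrite I in Hy.
  + by rewrite S.
  + done.
  + rewrite /mono3; move: (Hmax z) (Hmax y) Hle; clear - e; lia.
have M : forall a a', e a a' -> a != x -> a' != x -> deg e a' < deg e a -> False.
  move=> a a' Eaa' Hax Ha'x Lt.
  have as_ : forall y, e a y -> deg e y < deg e a.
    move=> y Hy; case: (eqVneq y a') => [->//|Hya'].
    rewrite ltnNge; apply/negP => Hle; apply: (noD3 a' a y); split.
    + split.
      * by apply/eqP => E; subst; rewrite I in Eaa'.
      * by rewrite eq_sym.
      * by apply/eqP => E; subst; rewrite I in Hy.
    + by rewrite S.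
    + done.
    + rewrite /mono3; move: Lt Hle; clear - e; lia.
  have da2 : 2 <= deg e a by move: (Hpos a') Lt; clear - e; lia.
  have [b Hb] : exists b, deg e b = 1.
    case: (pickP (fun b => deg e b == 1)) => [b /eqP Hb | H]; first by exists b.
    exfalso.
    have := CI I Hpos Hn.
    have -> : #|[set v | deg e v == 1]| = 0.
      apply/eqP; rewrite cards_eq0; apply/eqP/setP => v; by rewrite !inE H.
    move=> Hsum; have Ht := term_le_sum (fun v => deg e v - 2) x.
    have [y Hy] := nbr_ex (Hpos x).
    have := xs y Hy; have := Hpos y; have Hy1 := H y; simpl in Hy1.
    move/negbT/eqP: Hy1 => Hy1; move: Hsum Ht (xs y Hy) (Hpos y) Hy1; clear - e; simpl; lia.
  have [w Hbw] := nbr_ex (Hpos b).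
  have Hwb : e w b by rewrite S.
  have dw2 : 2 <= deg e w.
    rewrite leqNgt; apply/negP => Hlt.
    have dw1 : deg e w = 1 by move: (Hpos w) Hlt; clear - e; lia.
    have All : forall y, (y == b) || (y == w).
      apply: (closedT (P := fun y => (y == b) || (y == w)) (x0 := b)) C _ _; first by rewrite eqxx.
      move=> u v /orP [] /eqP -> H.
      + by rewrite (nbr1 Hb Hbw H) eqxx orbT.
      + by rewrite (nbr1 dw1 Hwb H) eqxx.
    by case/orP: (All x) => /eqP E; rewrite E ?Hb ?dw1 in Hx1.
  have ws : forall y, e w y -> deg e y < deg e w.
    move=> y Hy; case: (eqVneq y b) => [->|Hyb]; first by rewrite Hb.
    rewrite ltnNge; apply/negP => Hle; apply: (noD3 b w y); split.
    + split.
      * by apply/eqP => E; subst; rewrite I in Hbw.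
      * by rewrite eq_sym.
      * by apply/eqP => E; subst; rewrite I in Hy.
    + done.
    + done.
    + rewrite /mono3 Hb; move: Hle dw2; clear - e; lia.
  have dw3 : 3 <= deg e w.
    rewrite leqNgt; apply/negP => Hlt.
    have dw : deg e w = 2 by move: dw2 Hlt; clear - e; lia.
    have [y [Hy Hyb]] := nbr_other b dw2.
    have dy : deg e y = 1 by move: (ws y Hy) (Hpos y) dw; clear - e; lia.
    have Eyw : e y w by rewrite S.
    have Hby : b != y by rewrite eq_sym.
    have All : forall z, [|| z == b, z == w | z == y].
      apply: (closedT (P := fun z => [|| z == b, z == w | z == y]) (x0 := b)) C _ _;
        first by rewrite eqxx.
      move=> u v /or3P [] /eqP -> H.
      + by rewrite (nbr1 Hb Hbw H) eqxx orbT.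
      + by case: (nbr2 dw Hwb Hy Hby H) => ->; rewrite eqxx ?orbT.
      + by rewrite (nbr1 dy Eyw H) eqxx !orbT.
    have Xw : x = w.
      by case/or3P: (All x) => /eqP E //; rewrite E ?Hb ?dy in Hx1.
    have Aw : a = w.
      by case/or3P: (All a) => /eqP E //; rewrite E ?Hb ?dy in da2.
    by rewrite Xw Aw eqxx in Hax.
  pose P := if w == x then a else x.
  have HPw : P != w.
    rewrite /P; case: (eqVneq w x) => [E|H] /=; first by rewrite -E in Hax.
    by rewrite eq_sym.
  have HP2 : 2 <= deg e P by rewrite /P; case: (w == x).
  have HPs : forall y, e P y -> deg e y < deg e P by rewrite /P; case: (w == x).
  have NbP : ~~ e P b.
    apply/negP => H; rewrite S in H; have := nbr1 Hb Hbw H => E; by rewrite E eqxx in HPw.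
  have HPb : P != b by apply/eqP => E; rewrite E Hb in HP2.
  have Sm := Sat P b HPb NbP.
  rewrite Hmp in Sm.
  have [q0 [q1 [q2 Dq]]] := mp3 Sm.
  apply: (noD3 q0 q1 q2); apply: (TE3 S HPb NbP _ _ Dq).
  - left; apply: (smax_add (z := P) (o := b) S I HPb NbP).
    + by left.
    + by move=> y Hy; apply: ltnW (HPs y Hy).
    + by rewrite Hb.
  - right; apply: (smin_add (z := b) (o := P) S I HPb NbP).
    + by right.
    + by move=> y Hy; rewrite (nbr1 Hb Hbw Hy) Hb; move: dw3; clear - e; lia.
    + by rewrite Hb.
exists x; apply: star_of => //.
move=> a a' E; case: (eqVneq a x) => [_|Hax] //=; case: (eqVneq a' x) => [_|Ha'x] //=.
exfalso; case: (ltngtP (deg e a) (deg e a')) => H.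
- by apply: (M a' a) => //; rewrite S.
- exact: M E Hax Ha'x H.
- case: (leqP (deg e a) 1) => Ha1.
  + have da : deg e a = 1 by move: (deg_pos E) Ha1; clear - e; lia.
    have da' : deg e a' = 1 by move: H da; clear - e; lia.
    have E' : e a' a by rewrite S.
    have All : forall y, (y == a) || (y == a').
      apply: (closedT (P := fun y => (y == a) || (y == a')) (x0 := a)) C _ _; first by rewrite eqxx.
      move=> u v /orP [] /eqP -> H'.
      * by rewrite (nbr1 da E H') eqxx orbT.
      * by rewrite (nbr1 da' E' H') eqxx.
    by case/orP: (All x) => /eqP Ex; [rewrite Ex eqxx in Hax | rewrite Ex eqxx in Ha'x].
  + have [z [Hz Hza']] := nbr_other a' Ha1.
    apply: (noD3 z a a'); split.
    * split.
      -- by apply/eqP => Ez; subst; rewrite I in Hz.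
      -- done.
      -- by apply/eqP => Ez; subst; rewrite I in E.
    * by rewrite S.
    * done.
    * rewrite /mono3 -H; clear - e; lia.
Qed.


Lemma star_add (T : finType) (e : rel T) c : symmetric e -> irreflexive e -> is_star e c ->
  3 <= #|T| -> mp e = 2 -> saturated e ->
  forall u v, u != v -> ~~ e u v -> mp (add_edge e u v) = 3.
Proof.
move=> S I St H3 Hmp Sat u v Huv Ne.
have Sm := Sat u v Huv Ne; rewrite Hmp in Sm.
have leaf : forall y, y != c -> deg e y = 1.
  move=> y Hy; rewrite /deg -(cards1 c); apply: eq_card => z; rewrite !inE St Hy andbT.
  by case: (eqVneq y c) Hy => // _ _ /=.
have Hcn : forall y, y != c -> e c y by move=> y Hy; rewrite St eqxx Hy.
have Hu : u != c.
  apply/eqP => E; apply: (negP Ne); rewrite E; apply: Hcn; by rewrite -E eq_sym.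
have Hv : v != c.
  apply/eqP => E; apply: (negP Ne); rewrite S E; apply: Hcn; by rewrite -E.
case: (leqP #|T| 3) => Hn.
  have := mp_le_card (add_edge e u v); move: Sm Hn; clear; lia.
apply/eqP; rewrite eqn_leq Sm andbT leqNgt; apply/negP => H4.
have [p0 [p1 [p2 [p3 D]]]] := mp4 H4.
have D' := LB S I Huv (leaf _ Hu) (leaf _ Hv) _ _ _ D.
suff: 4 <= mp e by rewrite Hmp.
apply: D4_mp (D' c _ _ _).
- by rewrite S Hcn.
- by rewrite S Hcn.
- move=> y Hy.
  have Hcu : c != u by rewrite eq_sym.
  have Hcv : c != v by rewrite eq_sym.
  have Ecy := add_old Hy Hcu Hcv.
  have Hyc : y != c by apply/eqP => E; subst; rewrite I in Ecy.
  have dc : deg e c = #|T|.-1.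
    rewrite /deg -(cardsC1 c); apply: eq_card => z; rewrite !inE St eqxx /= andbF orbF eq_sym.
    by [].
  have dy : deg e y = 1 := leaf _ Hyc.
  rewrite !deg_add // (negbTE Hcu) (negbTE Hcv) dy dc /=.
  move: Hn; case: ((y == u) || (y == v)); clear; rewrite /= ?addn0 ?addn1; lia.
Qed.

Lemma card2_ge (T : finType) (A : {set T}) a b : a != b -> a \in A -> b \in A -> 2 <= #|A|.
Proof.
move=> H Ha Hb; have <- : #|[set a; b]| = 2 by rewrite cards2 H.
apply: subset_leq_card.
by apply/subsetP => z; rewrite !inE => /orP [] /eqP ->.
Qed.

Lemma deg2_of (T : finType) (e : rel T) q p r : e q p -> e q r -> p != r -> 2 <= deg e q.
Proof.
move=> H1 H2 H; rewrite /deg; apply: (card2_ge H); by rewrite inE.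
Qed.

Lemma card3_ge (T : finType) (A : {set T}) a b c : a != b -> a != c -> b != c ->
  a \in A -> b \in A -> c \in A -> 3 <= #|A|.
Proof.
move=> H1 H2 H3 Ha Hb Hc.
have -> : 3 = #|[set a; b; c]|.
  by rewrite -setUA cardsU1 cards2 H3 !inE (negbTE H1) (negbTE H2).
apply: subset_leq_card; apply/subsetP => z; rewrite !inE.
by case/orP => [/orP [] | ] /eqP ->.
Qed.

Lemma sum_excl1 (T : finType) (F : T -> nat) x v : v != x -> F v <= \sum_(i | i != x) F i.
Proof. by move=> H; rewrite (bigD1 v) //= leq_addr. Qed.

Lemma sum_excl2 (T : finType) (F : T -> nat) x v w : v != x -> w != x -> v != w ->
  F v + F w <= \sum_(i | i != x) F i.
Proof.
move=> H1 H2 H3; rewrite (bigD1 v) //= (bigD1 w) /=; last by rewrite H2 eq_sym H3.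
by rewrite addnA leq_addr.
Qed.

Lemma noD3star (T : finType) (e : rel T) x p q r : symmetric e ->
  (forall v, v != x -> deg e v = 1 /\ e v x) -> 2 <= deg e x -> D3 e p q r -> False.
Proof.
move=> S All Hx [[H1 H2 H3] E1 E2 M].
case: (eqVneq q x) => [Eq|Hq].
- subst q.
  have Hp : p != x by [].
  have Hr : r != x by rewrite eq_sym.
  have [dp _] := All _ Hp; have [dr _] := All _ Hr.
  move: M Hx; rewrite /mono3 dp dr; clear; lia.
- have [dq Eqx] := All _ Hq.
  rewrite S in E1.
  have Ep := nbr1 dq Eqx E1; have Er := nbr1 dq Eqx E2; by rewrite Ep Er eqxx in H2.
Qed.


Lemma K3_of (T : finType) (e : rel T) a b c : symmetric e -> irreflexive e ->
  e a b -> e a c -> e b c -> (forall z, [|| z == a, z == b | z == c]) -> is_K3 e.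
Proof.
move=> S I Eab Eac Ebc All.
have Hab : a != b by apply/eqP => E; subst; rewrite I in Eab.
have Hac : a != c by apply/eqP => E; subst; rewrite I in Eac.
have Hbc : b != c by apply/eqP => E; subst; rewrite I in Ebc.
split.
- rewrite -cardsT.
  have -> : [set: T] = [set a; b; c].
    apply/setP => z; rewrite !inE; move: (All z); by case/or3P => ->; rewrite ?orbT.
  by rewrite -setUA cardsU1 cards2 Hbc !inE (negbTE Hab) (negbTE Hac).
- have Eba : e b a by rewrite S.
  have Eca : e c a by rewrite S.
  have Ecb : e c b by rewrite S.
  have Hba : b != a by rewrite eq_sym.
  have Hca : c != a by rewrite eq_sym.
  have Hcb : c != b by rewrite eq_sym.
  move=> x y.
  case/or3P: (All x) => /eqP ->; case/or3P: (All y) => /eqP ->;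
    by rewrite ?I ?eqxx ?Eab ?Eac ?Ebc ?Eba ?Eca ?Ecb ?Hab ?Hac ?Hbc ?Hba ?Hca ?Hcb.
Qed.

Lemma p3_noleaf (T : finType) (e : rel T) (p : T) : symmetric e -> irreflexive e -> connected e ->
  nedges e <= #|T| -> mp e = 3 -> (forall v, 0 < deg e v) -> (forall v, deg e v != 1) ->
  is_K3 e.
Proof.
move=> S I C Hn Hmp Hpos Hno.
have noD4 : forall a b c d, D4 e a b c d -> False by move=> a b c d /D4_mp; rewrite Hmp.
have Hs := CI I Hpos Hn.
have H0 : #|[set v | deg e v == 1]| = 0.
  apply/eqP; rewrite cards_eq0; apply/eqP/setP => v; by rewrite !inE (negbTE (Hno v)).
rewrite H0 in Hs.
have d2 : forall v, deg e v = 2.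
  move=> v; have := term_le_sum (fun v => deg e v - 2) v; move: (Hpos v) (Hno v) Hs.
  clear; simpl; lia.
have [b Hab] := nbr_ex (Hpos p).
have [c [Hac Hcb]] := nbr_other b (eq_leq (esym (d2 p))).
have Eba : e b p by rewrite S.
have [d [Hbd Hdp]] := nbr_other p (eq_leq (esym (d2 b))).
case: (eqVneq d c) => [Edc|Hdc].
- subst d.
  have Hbc : b != c by rewrite eq_sym.
  have Hpb : p != b by apply/eqP => E; subst; rewrite I in Hab.
  have Hpc : p != c by apply/eqP => E; subst; rewrite I in Hac.
  have Eca : e c p by rewrite S.
  have Ecb : e c b by rewrite S.
  apply: (K3_of S I Hab Hac Hbd).
  apply: (closedT (P := fun z => [|| z == p, z == b | z == c]) (x0 := p)) C _ _;
    first by rewrite eqxx.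
  move=> u v /or3P [] /eqP -> H.
  + by case: (nbr2 (d2 p) Hab Hac Hbc H) => ->; rewrite eqxx ?orbT.
  + by case: (nbr2 (d2 b) Eba Hbd Hpc H) => ->; rewrite eqxx ?orbT.
  + by case: (nbr2 (d2 c) Eca Ecb Hpb H) => ->; rewrite eqxx ?orbT.
- exfalso; apply: (noD4 c p b d); split.
  + split.
    * by apply/eqP => E; subst; rewrite I in Hac.
    * done.
    * by rewrite eq_sym.
  + split.
    * by apply/eqP => E; subst; rewrite I in Hab.
    * by rewrite eq_sym.
    * by apply/eqP => E; subst; rewrite I in Hbd.
  + by split => //; rewrite S.
  + by rewrite /mono4 !d2; left.
Qed.

Lemma p3_caseA (T : finType) (e : rel T) x b : symmetric e -> irreflexive e -> connected e ->
  saturated e -> mp e = 3 -> (forall y, deg e y <= deg e x) -> 2 <= deg e x ->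
  (forall v, 0 < deg e v) -> deg e b = 1 -> ~~ e x b -> False.
Proof.
move=> S I C Sat Hmp Hmax Hx2 Hpos Hb Nxb.
have noD4 : forall a b c d, D4 e a b c d -> False by move=> a' b' c d /D4_mp; rewrite Hmp.
have sat4 : forall u v, u != v -> ~~ e u v -> exists p0 p1 p2 p3, D4 (add_edge e u v) p0 p1 p2 p3.
  move=> u v Huv Ne; apply: mp4; have := Sat u v Huv Ne; rewrite Hmp; done.
have [w Hbw] := nbr_ex (Hpos b).
have Hwb : e w b by rewrite S.
have Hwx : w != x by apply/eqP => E; subst; rewrite Hwb in Nxb.
have Hbx : b != x by apply/eqP => E; rewrite -E Hb in Hx2.
have Hxb : x != b by rewrite eq_sym.
have dw2 : 2 <= deg e w.
  rewrite leqNgt; apply/negP => Hlt.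
  have dw1 : deg e w = 1 by move: (Hpos w) Hlt; clear; lia.
  have All : forall y, (y == b) || (y == w).
    apply: (closedT (P := fun y => (y == b) || (y == w)) (x0 := b)) C _ _; first by rewrite eqxx.
    move=> u v /orP [] /eqP -> H.
    + by rewrite (nbr1 Hb Hbw H) eqxx orbT.
    + by rewrite (nbr1 dw1 Hwb H) eqxx.
  by case/orP: (All x) => /eqP E; [rewrite E eqxx in Hbx | rewrite E eqxx in Hwx].
case: (leqP 3 (deg e w)) => Hw3.
- have [p0 [p1 [p2 [p3 D]]]] := sat4 x b Hxb Nxb.
  apply: (noD4 p0 p1 p2 p3); apply: (TE4 S Hxb Nxb _ _ D).
  + left; apply: (smax_add (z := x) (o := b) S I Hxb Nxb); [by left | by [] | by rewrite Hb].
  + right; apply: (smin_add (z := b) (o := x) S I Hxb Nxb); [by right | | by rewrite Hb].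
    by move=> y Hy; rewrite (nbr1 Hb Hbw Hy) Hb.
have dw : deg e w = 2 by move: dw2 Hw3; clear; lia.
have [u [Hwu Hub]] := nbr_other b dw2.
have Hbu : b != u by rewrite eq_sym.
have Nbu : ~~ e b u.
  apply/negP => H; have E := nbr1 Hb Hbw H; subst u; by rewrite I in Hwu.
case: (eqVneq u x) => [Eux|Hux].
- subst u.
  have [p0 [p1 [p2 [p3 D]]]] := sat4 b x Hbx Nbu.
  apply: (noD4 p0 p1 p2 p3); apply: (LG S I Hbw Hb dw Hwu Hbx Nbu _ D).
  apply: (smax_add (z := x) (o := b) S I Hbx Nbu); [by right | by [] | by rewrite Hb].
have Euw : e u w by rewrite S.
have du2 : 2 <= deg e u.
  rewrite leqNgt; apply/negP => Hlt.
  have du1 : deg e u = 1 by move: (Hpos u) Hlt; clear; lia.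
  have All : forall z, [|| z == b, z == w | z == u].
    apply: (closedT (P := fun z => [|| z == b, z == w | z == u]) (x0 := b)) C _ _;
      first by rewrite eqxx.
    move=> u' v /or3P [] /eqP -> H.
    + by rewrite (nbr1 Hb Hbw H) eqxx orbT.
    + by case: (nbr2 dw Hwb Hwu Hbu H) => ->; rewrite eqxx ?orbT.
    + by rewrite (nbr1 du1 Euw H) eqxx !orbT.
  case/or3P: (All x) => /eqP E.
  + by rewrite E eqxx in Hbx.
  + by rewrite E eqxx in Hwx.
  + by rewrite E eqxx in Hux.
have Wu : forall y, e u y -> deg e y <= deg e u.
  move=> y Hy; rewrite leqNgt; apply/negP => Hlt.
  apply: (noD4 b w u y); split.
  - split.
    + by apply/eqP => E; subst; rewrite I in Hbw.
    + done.
    + apply/eqP => E; subst y; rewrite S in Hy; have E := nbr1 Hb Hbw Hy; subst u.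
      by rewrite I in Hwu.
  - split.
    + by apply/eqP => E; subst; rewrite I in Hwu.
    + by apply/eqP => E; subst y; move: Hlt du2; rewrite dw; clear; lia.
    + by apply/eqP => E; subst; rewrite I in Hy.
  - by split.
  - by rewrite /mono4 Hb dw; move: du2 Hlt; clear; lia.
have [p0 [p1 [p2 [p3 D]]]] := sat4 b u Hbu Nbu.
apply: (noD4 p0 p1 p2 p3); apply: (LG S I Hbw Hb dw Hwu Hbu Nbu _ D).
apply: (smax_add (z := u) (o := b) S I Hbu Nbu); [by right | by [] | by rewrite Hb].
Qed.


Lemma p3_caseB (T : finType) (e : rel T) x b0 p q r : symmetric e -> irreflexive e ->
  connected e -> saturated e -> nedges e <= #|T| -> mp e = 3 ->
  (forall y, deg e y <= deg e x) -> 2 <= deg e x ->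
  (forall v, 0 < deg e v) -> deg e b0 = 1 -> (forall y, deg e y = 1 -> e x y) ->
  D3 e p q r -> False.
Proof.
move=> S I C Sat Hn Hmp Hmax Hx2 Hpos Hb0 Hall D.
have noD4 : forall a b c d, D4 e a b c d -> False by move=> a' b' c d /D4_mp; rewrite Hmp.
have sat4 : forall u v, u != v -> ~~ e u v -> exists p0 p1 p2 p3, D4 (add_edge e u v) p0 p1 p2 p3.
  move=> u v Huv Ne; apply: mp4; have := Sat u v Huv Ne; rewrite Hmp; done.
have LN : forall l z, deg e l = 1 -> e l z -> z = x.
  move=> l z Hl Hz; have := Hall l Hl; rewrite S => Hlx; exact: nbr1 Hl Hlx Hz.
have Exb0 := Hall _ Hb0.
have Hb0x : b0 != x by apply/eqP => E; rewrite -E Hb0 in Hx2.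
case: (leqP (deg e x) 2) => Hx3.
-
  have dx : deg e x = 2 by move: Hx2 Hx3; clear; lia.
  have [y1 [Hxy1 Hy1b]] := nbr_other b0 Hx2.
  have Hb0y1 : b0 != y1 by rewrite eq_sym.
  case: (eqVneq (deg e y1) 1) => Hy1.
  + apply: (noD3star (x := x) S _ Hx2 D) => v Hv.
    have All : forall z, [|| z == x, z == b0 | z == y1].
      apply: (closedT (P := fun z => [|| z == x, z == b0 | z == y1]) (x0 := x)) C _ _;
        first by rewrite eqxx.
      move=> u v' /or3P [] /eqP -> H.
      * by case: (nbr2 dx Exb0 Hxy1 Hb0y1 H) => ->; rewrite eqxx ?orbT.
      * by rewrite (LN _ _ Hb0 H) eqxx.
      * by rewrite (LN _ _ Hy1 H) eqxx.
    case/or3P: (All v) => /eqP E; first by rewrite E eqxx in Hv.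
    * by subst; split => //; rewrite S.
    * by subst; split => //; rewrite S.
  + have dy1 : deg e y1 = 2.
      by move: (Hmax y1) (Hpos y1) Hy1 dx; clear; lia.
    have [z [Hy1z Hzx]] := nbr_other x (eq_leq (esym dy1)).
    have Hzb0 : z != b0.
      apply/eqP => E; subst z; rewrite S in Hy1z; have E := LN _ _ Hb0 Hy1z; subst y1.
      by rewrite I in Hxy1.
    have dz : deg e z = 2.
      case: (eqVneq (deg e z) 1) => Hz1.
      * have Exz := Hall _ Hz1.
        case: (nbr2 dx Exb0 Hxy1 Hb0y1 Exz) => E; subst z; first by rewrite eqxx in Hzb0.
        by rewrite I in Hy1z.
      * by move: (Hmax z) (Hpos z) Hz1 dx; clear; lia.
    apply: (noD4 b0 x y1 z); split.
    * split => //; by rewrite eq_sym.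
    * split.
      -- by apply/eqP => E; subst; rewrite I in Hxy1.
      -- by rewrite eq_sym.
      -- by apply/eqP => E; subst; rewrite I in Hy1z.
    * by split => //; rewrite S.
    * by rewrite /mono4 Hb0 dx dy1 dz; left.
case: (pickP (fun a => [&& a != x, 2 <= deg e a & [forall y, e a y ==> (deg e y <= deg e a)]]))
  => [a /and3P [Hax Ha2 /forallP Wa] | NWM0].
  have Hab0 : a != b0 by apply/eqP => E; rewrite E Hb0 in Ha2.
  have Nab0 : ~~ e a b0.
    apply/negP => H; rewrite S in H; have E := LN _ _ Hb0 H; by rewrite E eqxx in Hax.
  have [p0 [p1 [p2 [p3 D4']]]] := sat4 a b0 Hab0 Nab0.
  apply: (noD4 p0 p1 p2 p3); apply: (TE4 S Hab0 Nab0 _ _ D4').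
  + left; apply: (smax_add (z := a) (o := b0) S I Hab0 Nab0); [by left | | by rewrite Hb0].
    by move=> y Hy; apply: (implyP (Wa y)).
  + right; apply: (smin_add (z := b0) (o := a) S I Hab0 Nab0); [by right | | by rewrite Hb0].
    by move=> y Hy; rewrite (LN _ _ Hb0 Hy) Hb0.
have NWM : forall a, a != x -> 2 <= deg e a -> exists y, e a y /\ deg e a < deg e y.
  move=> a Hax Ha2; have := NWM0 a; rewrite /= Hax Ha2 /= => /negbT /forallPn [y].
  by rewrite negb_imply -ltnNge => /andP [Hy Hlt]; exists y.
set L := [set v | deg e v == 1].
set N := [set y | e x y].
have LsubN : L \subset N by apply/subsetP => v; rewrite !inE => /eqP /Hall.
set j := #|N :\: L|.
have Hj : deg e x = #|L| + j.
  by rewrite /deg -/N -(cardsID L N) (setIidPr LsubN).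
have HCI := CI I Hpos Hn.
set Sx := \sum_(v | v != x) (deg e v - 2).
have HSx : \sum_v (deg e v - 2) = (deg e x - 2) + Sx by rewrite (bigD1 x).
have Star : j + Sx <= 2 by move: HCI HSx Hj Hx3; rewrite -/L; clear; lia.
have inNL : forall y, (y \in N :\: L) = e x y && (deg e y != 1) by move=> y; rewrite !inE andbC.
have SxE1 : forall v, v != x -> deg e v - 2 <= Sx by move=> v Hv; exact: sum_excl1.
have SxE2 : forall v w, v != x -> w != x -> v != w -> (deg e v - 2) + (deg e w - 2) <= Sx.
  by move=> v w Hv Hw Hvw; exact: sum_excl2.
case: (eqVneq j 0) => Hj0.
  apply: (noD3star (x := x) S _ (ltnW Hx3) D) => v Hv.
  have All : forall z, (z == x) || (deg e z == 1).
    apply: (closedT (P := fun z => (z == x) || (deg e z == 1)) (x0 := x)) C _ _;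
      first by rewrite eqxx.
    move=> u v' /orP [/eqP ->|/eqP H1] H.
    * apply/orP; right; apply/negPn/negP => H'.
      have : 0 < j by apply/card_gt0P; exists v'; rewrite inNL H.
      by rewrite Hj0.
    * by rewrite (LN _ _ H1 H) eqxx.
  case/orP: (All v) => [/eqP E|/eqP H1]; first by rewrite E eqxx in Hv.
  by split => //; rewrite S; apply: Hall.
have [y1] : exists y1, y1 \in N :\: L.
  by apply/card_gt0P; rewrite -/j lt0n.
rewrite inNL => /andP [Hxy1 Hy1n1].
have dy12 : 2 <= deg e y1 by move: (Hpos y1) Hy1n1; clear; lia.
have Hy1x : y1 != x by apply/eqP => E; subst; rewrite I in Hxy1.
have Ey1x : e y1 x by rewrite S.
have [y' [Hy1y' Hy'x]] := nbr_other x dy12.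
have Hy1y'ne : y1 != y' by apply/eqP => E; subst; rewrite I in Hy1y'.
have Ey'y1 : e y' y1 by rewrite S.
case: (boolP (e x y')) => Hxy'.
- have Hy'n1 : deg e y' != 1.
    apply/eqP => H1; have E := LN _ _ H1 Ey'y1; by rewrite E eqxx in Hy1x.
  have j2 : 2 <= j by apply: (card2_ge Hy1y'ne); rewrite inNL ?Hxy1 ?Hxy' ?Hy1n1 ?Hy'n1.
  have Sx0 : Sx = 0 by move: Star j2; clear; lia.
  have jj : j = 2 by move: Star j2; clear; lia.
  have dy1 : deg e y1 = 2 by move: (SxE1 _ Hy1x) dy12; rewrite Sx0; clear; lia.
  have dy' : deg e y' = 2 by move: (SxE1 _ Hy'x) (Hpos y') Hy'n1; rewrite Sx0; clear; lia.
  have NX : forall z, e x z -> [\/ deg e z = 1, z = y1 | z = y'].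
    move=> z Hz; case: (eqVneq (deg e z) 1) => [H|H]; first by apply: Or31.
    case: (eqVneq z y1) => [->|H1]; first by apply: Or32.
    case: (eqVneq z y') => [->|H2]; first by apply: Or33.
    exfalso; have : 3 <= j.
      apply: (card3_ge (c := z) Hy1y'ne).
      * by rewrite eq_sym.
      * by rewrite eq_sym.
      * by rewrite inNL Hxy1.
      * by rewrite inNL Hxy'.
      * by rewrite inNL Hz.
    by rewrite jj.
  have Hxy'ne : x != y' by rewrite eq_sym.
  have Hxy1ne : x != y1 by rewrite eq_sym.
  have Ey'x : e y' x by rewrite S.
  have All : forall z, [|| z == x, z == y1, z == y' | deg e z == 1].
    apply: (closedT (P := fun z => [|| z == x, z == y1, z == y' | deg e z == 1]) (x0 := x)) C _ _;
      first by rewrite eqxx.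
    move=> u v /or4P [/eqP->|/eqP->|/eqP->|/eqP Hu] H.
    + by case: (NX _ H) => [->|->|->]; rewrite ?eqxx ?orbT.
    + by case: (nbr2 dy1 Ey1x Hy1y' Hxy'ne H) => ->; rewrite eqxx ?orbT.
    + by case: (nbr2 dy' Ey'x Ey'y1 Hxy1ne H) => ->; rewrite eqxx ?orbT.
    + by rewrite (LN _ _ Hu H) eqxx.
  have dxv : deg e x = #|L| + 2 by rewrite Hj jj.
  have L1 : 1 <= #|L| by apply/card_gt0P; exists b0; rewrite inE Hb0.
  have Hxb0 : x != b0 by rewrite eq_sym.
  case: (leqP #|L| 1) => HL.
  + have Lb0 : forall z, deg e z = 1 -> z = b0.
      move=> z Hz; apply/eqP; apply/negPn/negP => Hzb.
      have : 2 <= #|L| by apply: (card2_ge Hzb); rewrite inE ?Hz ?Hb0.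
      move: HL; clear; lia.
    have dx3 : deg e x = 3 by move: dxv L1 HL; clear; lia.
    have Hy1b0 : y1 != b0 by apply/eqP => E; rewrite E Hb0 in dy12.
    have Ny1b0 : ~~ e y1 b0.
      apply/negP => H; rewrite S in H; have E := LN _ _ Hb0 H; by rewrite E eqxx in Hy1x.
    have [p0 [p1 [p2 [p3 D4']]]] := sat4 y1 b0 Hy1b0 Ny1b0.
    apply: (LS (x := x) (y := y1) (add_sym y1 b0 S) _ D4') => z.
    case/or4P: (All z) => [/eqP->|/eqP->|/eqP->|/eqP Hz];
      [exact: Or31 | exact: Or32 | apply: Or33 | apply: Or33].
    * move=> t Ht.
      have Hy'b0 : y' != b0 by apply/eqP => E; rewrite E Hb0 in dy'.
      have Hy'y1 : y' != y1 by rewrite eq_sym.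
      have Ht' := add_old Ht Hy'y1 Hy'b0.
      rewrite !deg_add // (negbTE Hy'y1) (negbTE Hy'b0) /=.
      case: (nbr2 dy' Ey'x Ey'y1 Hxy1ne Ht') => ->;
        rewrite ?eqxx /= ?(negbTE Hxy1ne) ?(negbTE Hxb0) /= dy' ?dx3 ?dy1 //.
    * rewrite (Lb0 _ Hz).
      apply: (smin_add (z := b0) (o := y1) S I Hy1b0 Ny1b0); [by right | | by rewrite Hb0 dy1].
      by move=> t Ht; rewrite (LN _ _ Hb0 Ht) Hb0 dx3.
  + have [b2] : exists b2, b2 \in L :\ b0.
      apply/card_gt0P; have := cardsD1 b0 L; rewrite inE Hb0 eqxx /= => HH.
      move: HH HL; clear; lia.
    rewrite !inE => /andP [Hb2b0 /eqP Hb2].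
    have Hb0b2 : b0 != b2 by rewrite eq_sym.
    have Nb0b2 : ~~ e b0 b2.
      apply/negP => H; have E := LN _ _ Hb0 H; by rewrite -E Hb2 in Hx3.
    have Hxb2 : x != b2 by apply/eqP => E; rewrite E Hb2 in Hx3.
    have [p0 [p1 [p2 [p3 D4']]]] := sat4 b0 b2 Hb0b2 Nb0b2.
    apply: (noD4 p0 p1 p2 p3); apply: (LB (x := x) S I Hb0b2 Hb0 Hb2 _ _ _ D4').
    * by rewrite S.
    * by rewrite S; apply: Hall.
    * move=> t Ht; have Ext := add_old Ht Hxb0 Hxb2.
      have Le : deg (add_edge e b0 b2) t <= deg e t + 1.
        by rewrite deg_add // leq_add2l leq_b1.
      rewrite [deg (add_edge e b0 b2) x]deg_add // (negbTE Hxb0) (negbTE Hxb2) /= addn0 dxv.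
      case: (NX _ Ext) => [Ht1|->|->]; rewrite ?Ht1 ?dy1 ?dy';
        rewrite deg_add // ?Ht1 ?dy1 ?dy'; move: (leq_b1 ((t == b0) || (t == b2))) HL; clear; lia.
- have Hy'n1 : deg e y' != 1 by apply/eqP => H1; rewrite Hall in Hxy'.
  have dy'2 : 2 <= deg e y' by move: (Hpos y') Hy'n1; clear; lia.
  have [z' [Hy'z' Hlt']] := NWM y' Hy'x dy'2.
  have Hz'x : z' != x by apply/eqP => E; subst z'; rewrite S Hy'z' in Hxy'.
  have j1 : 1 <= j by apply/card_gt0P; exists y1; rewrite inNL Hxy1.
  have Sx1 : Sx <= 1 by move: Star j1; clear; lia.
  have dz' : deg e z' = 3 by move: (SxE1 _ Hz'x) Sx1 Hlt' dy'2; clear; lia.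
  have [t [Hz't Hlt'']] := NWM z' Hz'x (ltnW (eq_leq (esym dz'))).
  have Htx : t = x.
    apply/eqP; apply/negPn/negP => Htx.
    have Htz' : z' != t by apply/eqP => E; subst; move: Hlt''; clear; lia.
    by move: (SxE2 _ _ Hz'x Htx Htz') Sx1 Hlt'' dz'; clear; lia.
  subst t.
  have Exz' : e x z' by rewrite S.
  have Ez'y1 : z' = y1.
    apply/eqP; apply/negPn/negP => Hne.
    have : 2 <= j.
      apply: (card2_ge Hne); rewrite inNL ?Exz' ?Hxy1 ?dz' //.
    move=> j2; move: (SxE1 _ Hz'x) Star j2 dz'; clear; lia.
  subst z'.
  have Hy'y1 : y' != y1 by rewrite eq_sym.
  have dy' : deg e y' = 2 by move: (SxE2 _ _ Hy1x Hy'x Hy1y'ne) Sx1 dz' dy'2; clear; lia.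
  have [rr [Hy'rr Hry1]] := nbr_other y1 dy'2.
  have Hrx : rr != x by apply/eqP => E; subst rr; rewrite S Hy'rr in Hxy'.
  have Erry' : e rr y' by rewrite S.
  have Hrn1 : deg e rr != 1.
    apply/eqP => H1; have E := LN _ _ H1 Erry'; by rewrite E eqxx in Hy'x.
  have Hy1r : y1 != rr by rewrite eq_sym.
  have dr : deg e rr = 2.
    by move: (SxE2 _ _ Hy1x Hrx Hy1r) Sx1 dz' (Hpos rr) Hrn1; clear; lia.
  have [t' [Hrt' Hlt3]] := NWM rr Hrx (eq_leq (esym dr)).
  have Et' : t' = y1.
    apply/eqP; apply/negPn/negP => Hne.
    case: (eqVneq t' x) => [E|Htx].
    + subst t'.
      have : 2 <= j.
        apply: (card2_ge Hy1r); rewrite inNL ?Hxy1 ?Hy1n1 //.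
        by rewrite S Hrt' /= dr.
      move=> j2; move: (SxE1 _ Hy1x) Star j2 dz'; clear; lia.
    + have Hy1t : y1 != t' by rewrite eq_sym.
      by move: (SxE2 _ _ Hy1x Htx Hy1t) Sx1 dz' Hlt3 dr; clear; lia.
  subst t'.
  apply: (noD4 y' rr y1 x); split.
  + split => //; by apply/eqP => E; subst; rewrite I in Hy'rr.
  + by split.
  + by split.
  + rewrite /mono4 dy' dr dz'; left; move: (Hmax y1); rewrite dz'; clear; lia.
Qed.


Theorem lemma3p2 (T : finType) (e : rel T) :
  simple_graph e -> connected e -> saturated e ->
  nedges e <= #|T| -> 2 <= mp e <= 3 ->
  (mp e = 2 ->
     (exists c : T, is_star e c) /\ 2 <= #|T| /\
     (3 <= #|T| ->
        forall u v : T, u != v -> ~~ e u v -> mp (add_edge e u v) = 3)) /\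
  (mp e = 3 -> is_K3 e).
Proof.
move=> [S I] C Sat Hn _; split.
- move=> Hmp; have [c Hc] := part2 S I C Sat Hn Hmp.
  split; first by exists c.
  split; first by rewrite -Hmp mp_le_card.
  move=> H3; exact: (star_add S I Hc H3 Hmp Sat).
- move=> Hmp.
  have H3 : 3 <= mp e by rewrite Hmp.
  have [p [q [r D]]] := mp3 H3.
  have D' := D; case: D' => [[Hpq Hpr Hqr] Epq Eqr _].
  have Hpos : forall v, 0 < deg e v.
    move=> v; case: (eqVneq v p) => [->|H]; [exact: deg_pos Epq | exact: deg_pos_conn C H].
  case: (pickP (fun b => deg e b == 1)) => [b0 /eqP Hb0 | Hno].
  + exfalso.
    have [x Hmax] := argmax_deg e p.
    have Eqp : e q p by rewrite S.
    have Hx2 : 2 <= deg e x := leq_trans (deg2_of Eqp Eqr Hpr) (Hmax q).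
    case: (pickP (fun b => (deg e b == 1) && ~~ e x b)) => [b /andP [/eqP Hb Nxb] | Hall0].
    * exact: (p3_caseA S I C Sat Hmp Hmax Hx2 Hpos Hb Nxb).
    * apply: (p3_caseB S I C Sat Hn Hmp Hmax Hx2 Hpos Hb0 _ D).
      move=> y Hy; have := Hall0 y; rewrite /= Hy eqxx /= => /negbT; by rewrite negbK.
  + apply: (p3_noleaf p S I C Hn Hmp Hpos) => v; by rewrite Hno.
Qed.
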